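(* Let $\langle S\mid R\rangle\cong\mathbb{Z}^n$ be a 3-presentation such that $|S|$ is minimal among all 3-presentations of $\mathbb{Z}^n$, and fix an isomorphism $\phi:\langle S\mid R\rangle\to\mathbb{Z}^n$. Then for each $r\in R$ whose normal form is not the empty word, the normal form of $r$ is $g^ah^bi^c$ with $g,h,i\in S$ distinct and $a,b,c\neq0$, and $\dim r=2$.
   Context: A 3-presentation of a group $G$ is a group presentation $\langle S\mid R\rangle\cong G$ (with $S,R$ finite) in which each relation is the empty word, $g^a$, $g^ah^b$, or $g^ah^bi^c$ with $g,h,i\in S$ and $a,b,c\in\mathbb{Z}$. Such a word is in normal form if its generators are distinct and its exponents nonzero; every relation $r$ is conjugate in the free group on $S$ to a normal-form word $w$, unique up to cyclic permutation, and we write $r\leadsto w$. Given the isomorphism $\phi$, for $S'\subseteq S$ let $\dim S'=\dim\operatorname{span}_{\mathbb{R}}\{\phi(g):g\in S'\}$, viewing $\phi(g)\in\mathbb{Z}^n\subseteq\mathbb{R}^n$; for $r\in R$ with $r\leadsto\prod_i g_i^{a_i}$, $\dim r=\dim\{g_i\}$. *)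

(* Defs.v *)
From HB Require Import structures.
From mathcomp Require Import all_boot all_order all_algebra.
From mathcomp Require Import reals.
Set Implicit Arguments. Unset Strict Implicit. Unset Printing Implicit Defensive.
Import Order.TTheory GRing.Theory Num.Theory.
Local Open Scope ring_scope.

(* Generators S = 'I_m.  A letter is a generator together with a flag
   (false = g, true = g^-1); words over S^{+-1} are sequences of letters. *)
Definition letter (m : nat) := ('I_m * bool)%type.
Definition word (m : nat) := seq (letter m).

Definition inv_letter m (x : letter m) : letter m := (x.1, ~~ x.2).
Definition inv_word m (w : word m) : word m := rev (map (@inv_letter m) w).

Definition pow_word m (p : 'I_m * int) : word m :=
  match p.2 with
  | Posz k => nseq k (p.1, false)
  | Negz k => nseq k.+1 (p.1, true)
  end.

Definition syl_word m (r : seq ('I_m * int)) : word m :=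
  flatten (map (@pow_word m) r).

(* Equality in the group <S | rels>: the smallest congruence on words
   (w.r.t. concatenation) making x x^-1 = 1 and every relator = 1. *)
Inductive pres_eq (m : nat) (rels : seq (word m)) : word m -> word m -> Prop :=
| pe_refl w : pres_eq rels w w
| pe_sym w1 w2 : pres_eq rels w1 w2 -> pres_eq rels w2 w1
| pe_trans w1 w2 w3 : pres_eq rels w1 w2 -> pres_eq rels w2 w3 -> pres_eq rels w1 w3
| pe_cat u1 u2 v1 v2 : pres_eq rels u1 v1 -> pres_eq rels u2 v2 ->
    pres_eq rels (u1 ++ u2) (v1 ++ v2)
| pe_free (x : letter m) : pres_eq rels [:: x; inv_letter x] [::]
| pe_rel r : r \in rels -> pres_eq rels r [::].

Definition free_eq m (w1 w2 : word m) := pres_eq [::] w1 w2.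

Definition three_pres m (rels : seq (seq ('I_m * int))) : bool :=
  all (fun r => size r <= 3)%N rels.

Definition eval_word m n (v : 'I_m -> 'rV[int]_n) (w : word m) : 'rV[int]_n :=
  \sum_(x <- w) (if x.2 then - v x.1 else v x.1).

(* The assignment g |-> v g induces an isomorphism phi : <S | rels> -> Z^n:
   it is well defined (relators map to 0), surjective and injective.
   (Every homomorphism out of <S|rels> is determined by such a v.) *)
Definition pres_iso m n (rels : seq (seq ('I_m * int))) (v : 'I_m -> 'rV[int]_n)
  : Prop :=
  [/\ forall r, r \in rels -> eval_word v (syl_word r) = 0,
      forall y : 'rV[int]_n, exists w : word m, eval_word v w = y
    & forall w1 w2 : word m, eval_word v w1 = eval_word v w2 ->
        pres_eq (map (@syl_word m) rels) w1 w2].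

Definition normal_form m (w : seq ('I_m * int)) : bool :=
  uniq (map fst w) && all (fun p => p.2 != 0) w.

(* r ~> w : r is conjugate in the free group to the normal-form word w. *)
Definition leadsto m (r w : seq ('I_m * int)) : Prop :=
  normal_form w /\
  exists u : word m, free_eq (u ++ syl_word r ++ inv_word u) (syl_word w).

(* dim S' = dim span_R {phi g : g in S'}, with Z^n inside R^n. *)
Definition dimR (R : realType) m n (v : 'I_m -> 'rV[int]_n) (gs : seq 'I_m) : nat :=
  \dim (<< [seq map_mx (fun z : int => z%:~R : R) (v g) | g <- gs] >>)%VS.

(* Main.v *)
Require Import Defs.
From HB Require Import structures.
From mathcomp Require Import all_boot all_order all_algebra.
From mathcomp Require Import reals zify ring.
Set Implicit Arguments. Unset Strict Implicit. Unset Printing Implicit Defensive.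
Import Order.TTheory GRing.Theory Num.Theory.
Local Open Scope ring_scope.

Section Words.
Variable m : nat.
Implicit Types (w u : word m) (x : letter m).

Lemma inv_letterK x : inv_letter (inv_letter x) = x.
Proof. by case: x => g b; rewrite /inv_letter /= negbK. Qed.

Lemma inv_word_cat u w : inv_word (u ++ w) = inv_word w ++ inv_word u.
Proof. by rewrite /inv_word map_cat rev_cat. Qed.

Lemma inv_wordK w : inv_word (inv_word w) = w.
Proof.
rewrite /inv_word map_rev revK -map_comp.
by rewrite (eq_map (g := id)) ?map_id // => x /=; rewrite inv_letterK.
Qed.

Lemma inv_word_cons x w : inv_word (x :: w) = inv_word w ++ [:: inv_letter x].
Proof. by rewrite -cat1s inv_word_cat. Qed.

Lemma pres_cancel rels u : pres_eq rels (u ++ inv_word u) [::].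
Proof.
elim: u => [|x u IH] /=; first exact: pe_refl.
rewrite inv_word_cons.
have -> : x :: u ++ inv_word u ++ [:: inv_letter x] =
  [:: x] ++ ((u ++ inv_word u) ++ [:: inv_letter x]) by rewrite /= catA.
apply: pe_trans (pe_free rels x).
have -> : [:: x; inv_letter x] = [:: x] ++ ([::] ++ [:: inv_letter x]) by [].
apply: pe_cat; first exact: pe_refl.
apply: pe_cat => //; exact: pe_refl.
Qed.

Lemma free_sub rels w1 w2 : free_eq w1 w2 -> pres_eq rels w1 w2.
Proof.
elim=> {w1 w2}.
- by move=> w; apply: pe_refl.
- by move=> ? ? _ H; apply: pe_sym.
- by move=> ? ? ? _ H1 _ H2; apply: pe_trans H1 H2.
- by move=> ? ? ? ? _ H1 _ H2; apply: pe_cat.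
- by move=> x; apply: pe_free.
- by [].
Qed.

Lemma pres_inv w1 w2 : free_eq w1 w2 -> free_eq (inv_word w1) (inv_word w2).
Proof.
elim=> {w1 w2}.
- by move=> w; apply: pe_refl.
- by move=> ? ? _ H; apply: pe_sym.
- by move=> ? ? ? _ H1 _ H2; apply: pe_trans H1 H2.
- by move=> ? ? ? ? _ H1 _ H2; rewrite !inv_word_cat; apply: pe_cat.
- move=> x.
  change (free_eq [:: inv_letter (inv_letter x); inv_letter x] [::]).
  rewrite inv_letterK; exact: pe_free.
- by [].
Qed.

Definition evalz (V : zmodType) (f : 'I_m -> V) w : V :=
  \sum_(x <- w) (if x.2 then - f x.1 else f x.1).

Lemma evalz_cat (V : zmodType) (f : 'I_m -> V) u w : evalz f (u ++ w) = evalz f u + evalz f w.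
Proof. by rewrite /evalz big_cat. Qed.

Lemma evalz_inv (V : zmodType) (f : 'I_m -> V) w : evalz f (inv_word w) = - evalz f w.
Proof.
rewrite /evalz /inv_word big_rev big_map -sumrN; apply: eq_bigr => x _.
by case: x => g [] /=; rewrite ?opprK.
Qed.

Lemma evalz_pres (V : zmodType) (f : 'I_m -> V) rels w1 w2 :
  (forall r, r \in rels -> evalz f r = 0) -> pres_eq rels w1 w2 -> evalz f w1 = evalz f w2.
Proof.
move=> Hr; elim=> {w1 w2} //.
- by move=> ? ? ? _ -> _ ->.
- by move=> ? ? ? ? _ H1 _ H2; rewrite !evalz_cat H1 H2.
- move=> [g b]; rewrite /evalz !big_cons big_nil /=.
  by case: b => /=; rewrite ?opprK addr0 ?subrr // addNr.
- by move=> r /Hr ->; rewrite /evalz big_nil.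
Qed.

Lemma evalz_pow (V : zmodType) (f : 'I_m -> V) (p : 'I_m * int) :
  evalz f (pow_word p) = f p.1 *~ p.2.
Proof.
case: p => g [k|k]; rewrite /pow_word /evalz /=.
  elim: k => [|k IH]; first by rewrite big_nil.
  by rewrite /= big_cons /= IH -!pmulrn mulrS.
have H : forall j, \sum_(x <- nseq j (g, true)) (if x.2 then - f x.1 else f x.1) = - (f g *~ j).
  elim=> [|j IH]; first by rewrite big_nil oppr0.
  by rewrite /= big_cons /= IH -!pmulrn mulrS opprD.
by rewrite -[_ :: _]/(nseq k.+1 (g,true)) H NegzE mulrNz.
Qed.

Lemma evalz_syl (V : zmodType) (f : 'I_m -> V) r :
  evalz f (syl_word r) = \sum_(p <- r) f p.1 *~ p.2.
Proof.
elim: r => [|p r IH]; first by rewrite /syl_word /evalz /= !big_nil.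
by rewrite /syl_word /= evalz_cat evalz_pow big_cons -IH.
Qed.

Lemma eval_wordE n (v : 'I_m -> 'rV[int]_n) w : eval_word v w = evalz v w.
Proof. by []. Qed.

Lemma pow_inv (g : 'I_m) p : inv_word (pow_word (g, p)) = pow_word (g, - p).
Proof.
rewrite /inv_word /pow_word /=.
case: p => [[|k]|k] //=.
  by rewrite -[_ :: _]/(map (@inv_letter m) (nseq k.+1 (g,false))) map_nseq rev_nseq.
by rewrite -[_ :: _]/(map (@inv_letter m) (nseq k.+1 (g,true))) map_nseq rev_nseq.
Qed.

Lemma pow_succ (g : 'I_m) p :
  free_eq (pow_word (g, p) ++ [:: (g, false)]) (pow_word (g, p + 1)).
Proof.
case: p => [k|k].
  by rewrite /pow_word /= nseqD; apply: pe_refl.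
case: k => [|k].
  rewrite /pow_word /=; exact: (pe_free [::] (g,true)).
have -> : Negz k.+1 + 1 = Negz k by rewrite !NegzE; lia.
rewrite /pow_word /=.
have -> : (g, true) :: (g, true) :: nseq k (g, true) ++ [:: (g, false)] =
   (g,true) :: nseq k (g,true) ++ [:: (g,true); (g,false)].
  by congr cons; elim: k => //= k ->.
rewrite -[X in free_eq _ X]cats0.
change (free_eq (((g,true) :: nseq k (g,true)) ++ [:: (g,true); (g,false)]) (((g,true) :: nseq k (g,true)) ++ [::])).
apply: pe_cat; first exact: pe_refl.
exact: (pe_free [::] (g,true)).
Qed.

Lemma pow_pred (g : 'I_m) p :
  free_eq (pow_word (g, p) ++ [:: (g, true)]) (pow_word (g, p - 1)).
Proof.
case: p => [[|k]|k].
- by rewrite /pow_word /=; apply: pe_refl.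
- have -> : Posz k.+1 - 1 = Posz k by lia.
  rewrite /pow_word /=.
  have -> : (g, false) :: nseq k (g, false) ++ [:: (g, true)] =
     nseq k (g,false) ++ [:: (g,false); (g,true)].
    by elim: k => //= k ->.
  rewrite -[X in free_eq _ X]cats0.
  apply: pe_cat; first exact: pe_refl.
  exact: (pe_free [::] (g,false)).
- have -> : Negz k - 1 = Negz k.+1 by rewrite !NegzE; lia.
  rewrite /pow_word /=.
  have -> : (g, true) :: (g, true) :: nseq k (g, true) =
     ((g, true) :: nseq k (g, true)) ++ [:: (g,true)].
    by congr cons; elim: k => //= k ->.
  exact: pe_refl.
Qed.

Lemma nseqSr (T : Type) k (x : T) : x :: nseq k x = nseq k x ++ [:: x].
Proof. by elim: k => //= k ->. Qed.

Lemma pow_add (g : 'I_m) p q :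
  free_eq (pow_word (g, p) ++ pow_word (g, q)) (pow_word (g, p + q)).
Proof.
case: q => [k|k].
  elim: k => [|k IH]; first by rewrite /= cats0 addr0; apply: pe_refl.
  have -> : pow_word (g, Posz k.+1) = pow_word (g, Posz k) ++ [:: (g,false)].
    by rewrite /pow_word /= nseqSr.
  rewrite catA; apply: pe_trans (pe_cat IH (pe_refl _ [:: (g,false)])) _.
  have -> : p + Posz k.+1 = (p + Posz k) + 1 by lia.
  exact: pow_succ.
elim: k => [|k IH].
  by rewrite /pow_word /= -/(pow_word (g, p)) ; exact: pow_pred.
have -> : pow_word (g, Negz k.+1) = pow_word (g, Negz k) ++ [:: (g,true)].
  by rewrite /pow_word /= [(g,true) :: nseq k _]nseqSr.
rewrite catA; apply: pe_trans (pe_cat IH (pe_refl _ [:: (g,true)])) _.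
have -> : p + Negz k.+1 = (p + Negz k) - 1 by rewrite !NegzE; lia.
exact: pow_pred.
Qed.

End Words.

Section Hom.
Variables m m' : nat.
Variable fg : 'I_m -> word m'.

Definition ext (x : letter m) : word m' := if x.2 then inv_word (fg x.1) else fg x.1.
Definition hom (w : word m) : word m' := flatten (map ext w).

Lemma hom_cat u w : hom (u ++ w) = hom u ++ hom w.
Proof. by rewrite /hom map_cat flatten_cat. Qed.

Lemma hom_cons x w : hom (x :: w) = ext x ++ hom w.
Proof. by []. Qed.

Lemma ext_inv x : ext (inv_letter x) = inv_word (ext x).
Proof. by case: x => g [] //=; rewrite /ext /= inv_wordK. Qed.

Lemma hom_inv w : hom (inv_word w) = inv_word (hom w).
Proof.
elim: w => [|x w IH] //.
by rewrite inv_word_cons hom_cat IH hom_cons inv_word_cat /hom /= cats0 ext_inv.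
Qed.

Lemma evalz_hom (V : zmodType) (f : 'I_m -> V) (f' : 'I_m' -> V) w :
  (forall g, evalz f' (fg g) = f g) -> evalz f' (hom w) = evalz f w.
Proof.
move=> Hf; elim: w => [|x w IH]; first by rewrite /evalz !big_nil.
have Hx : evalz f' (ext x) = (if x.2 then - f x.1 else f x.1).
  by case: x => g [] /=; rewrite /ext /= ?evalz_inv Hf.
by rewrite hom_cons evalz_cat IH Hx /evalz big_cons.
Qed.

Lemma pres_hom rels rels' w1 w2 :
  (forall r, r \in rels -> pres_eq rels' (hom r) [::]) ->
  pres_eq rels w1 w2 -> pres_eq rels' (hom w1) (hom w2).
Proof.
move=> Hr; elim=> {w1 w2}.
- by move=> w; apply: pe_refl.
- by move=> ? ? _ H; apply: pe_sym.
- by move=> ? ? ? _ H1 _ H2; apply: pe_trans H1 H2.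
- by move=> ? ? ? ? _ H1 _ H2; rewrite !hom_cat; apply: pe_cat.
- move=> x; rewrite hom_cons hom_cons /hom /= cats0 ext_inv; exact: pres_cancel.
- by move=> r /Hr.
Qed.

End Hom.

Lemma hom_comp m1 m2 m3 (f1 : 'I_m2 -> word m3) (f2 : 'I_m1 -> word m2) w :
  hom f1 (hom f2 w) = hom (fun g => hom f1 (f2 g)) w.
Proof.
elim: w => [|x w IH] //.
rewrite !hom_cons hom_cat IH; congr (_ ++ _).
by case: x => g [] //=; rewrite /ext /= hom_inv.
Qed.

Lemma hom_id_free m (F : 'I_m -> word m) w :
  (forall g, free_eq (F g) [:: (g, false)]) -> free_eq (hom F w) w.
Proof.
move=> HF; elim: w => [|x w IH]; first exact: pe_refl.
rewrite hom_cons -cat1s; apply: pe_cat => //.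
case: x => g [] /=; rewrite /ext /=; last exact: HF.
have -> : [:: (g, true)] = inv_word [:: (g,false)] by [].
exact: pres_inv.
Qed.

Lemma hom_pow m m' (fg : 'I_m -> word m') (x : 'I_m) (k : 'I_m') p c :
  fg x = pow_word (k, p) -> free_eq (hom fg (pow_word (x, c))) (pow_word (k, p * c)).
Proof.
move=> Hx.
have H : forall (b : bool) j, free_eq (hom fg (nseq j (x, b))) (pow_word (k, (if b then - p else p) * j%:Z)).
  move=> b; elim=> [|j IH]; first by rewrite mulr0; apply: pe_refl.
  rewrite -[nseq j.+1 _]/((x,b) :: nseq j (x,b)) hom_cons.
  apply: pe_trans (pe_cat (pe_refl _ _) IH) _.
  have -> : ext fg (x, b) = pow_word (k, if b then - p else p).
    by clear IH; case: b; rewrite /ext /= Hx // pow_inv.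
  apply: pe_trans (pow_add _ _ _) _.
  have -> : (if b then - p else p) + (if b then - p else p) * j%:Z =
            (if b then - p else p) * j.+1%:Z by clear IH; case: b; lia.
  exact: pe_refl.
case: c => [j|j].
  by have := H false j; rewrite /pow_word /=.
have := H true j.+1.
have -> : - p * j.+1%:Z = p * Negz j by rewrite NegzE; lia.
by [].
Qed.

Lemma scale_intE n (x : 'rV[int]_n) (c : int) : x *~ c = c *: x.
Proof. by rewrite -scaler_int intz. Qed.

Lemma reduce n m rels (v : 'I_m -> 'rV[int]_n) (g h : 'I_m) (a b s t : int) :
  g != h -> three_pres rels -> pres_iso rels v ->
  s * a + t * b = 1 -> a *: v g + b *: v h = 0 ->
  exists m', exists rels' : seq (seq ('I_m' * int)), exists v' : 'I_m' -> 'rV[int]_n,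
   (m' < m)%N /\ three_pres rels' /\ pres_iso rels' v'.
Proof.
case: m rels v g h => [|k] rels v g h; first by case: g.
case: (unliftP g h) => [hn ->|->]; last by rewrite eqxx.
set h' := lift g hn => ngh T3 [Hrel Hsurj Hinj] Bez Rel.
pose u := t *: v g - s *: v h'.
have Hg : v g = b *: u.
  apply/rowP => j; move/rowP: Rel => /(_ j); rewrite /u !mxE => R.
  set x := v g 0 j in R *; set y := v h' 0 j in R *.
  have E : x = (s * a + t * b) * x by rewrite Bez mul1r.
  rewrite {1}E.
  have R2 : s * (a * x + b * y) = 0 by rewrite R mulr0.
  nia.
have Hh : v h' = - a *: u.
  apply/rowP => j; move/rowP: Rel => /(_ j); rewrite /u !mxE => R.
  set x := v g 0 j in R *; set y := v h' 0 j in R *.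
  have E : y = (s * a + t * b) * y by rewrite Bez mul1r.
  rewrite {1}E.
  have R2 : t * (a * x + b * y) = 0 by rewrite R mulr0.
  nia.
pose sig (x : 'I_k.+1) : 'I_k * int :=
  if x == g then (hn, b) else if x == h' then (hn, - a) else (odflt hn (unlift g x), 1).
pose fg (x : 'I_k.+1) : word k := pow_word (sig x).
pose v' (y : 'I_k) := if y == hn then u else v (lift g y).
pose psi (y : 'I_k) : word k.+1 :=
  if y == hn then syl_word [:: (g, t); (h', - s)] else [:: (lift g y, false)].
pose subst (r : seq ('I_k.+1 * int)) := map (fun p => ((sig p.1).1, (sig p.1).2 * p.2)) r.
exists k, (map subst rels), v'.
have F1 : forall x, evalz v' (fg x) = v x.
  move=> x; rewrite /fg evalz_pow scale_intE /sig.
  case: eqP => [->|/eqP nxg]; first by rewrite /v' eqxx.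
  case: eqP => [->|/eqP nxh]; first by rewrite /v' eqxx.
  case: (unliftP g x) nxg nxh => [y -> _ nyh|-> ]; last by rewrite eqxx.
  rewrite /= /v' scale1r; case: eqP => // eyh.
  by move: nyh; rewrite eyh /h' eqxx.
have F2 : forall y, evalz v (psi y) = v' y.
  move=> y; rewrite /psi /v'; case: eqP => _.
    by rewrite evalz_syl !big_cons big_nil addr0 /= !scale_intE scaleNr.
  by rewrite /evalz big_cons big_nil addr0.
have F3 : forall y, free_eq (hom fg (psi y)) [:: (y, false)].
  move=> y; rewrite /psi; case: eqP => [->|/eqP nyh].
    rewrite /syl_word /= !hom_cat /hom /= cats0.
    apply: pe_trans (pe_cat (hom_pow (k:=hn) (p:=b) t _) (hom_pow (k:=hn) (p:=-a) (-s) _)) _.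
    - by rewrite /fg /sig eqxx.
    - by rewrite /fg /sig eq_sym (negbTE ngh) eqxx.
    apply: pe_trans (pow_add _ _ _) _.
    have -> : b * t + - a * - s = 1 by rewrite mulrNN [b * t]mulrC [a * s]mulrC addrC Bez.
    exact: pe_refl.
  rewrite /hom /= cats0 /ext /= /fg /sig.
  have -> : (lift g y == g) = false by rewrite eq_sym; apply/negbTE/neq_lift.
  have -> : (lift g y == h') = false by rewrite /h' (inj_eq (@lift_inj _ g)) (negbTE nyh).
  by rewrite liftK /=; apply: pe_refl.
have F4 : forall r, free_eq (hom fg (syl_word r)) (syl_word (subst r)).
  elim=> [|p r IH]; first exact: pe_refl.
  rewrite /syl_word /= hom_cat; apply: pe_cat => //.
  case: p => x c /=; apply: hom_pow; rewrite /fg; by case: (sig x).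
split=> //; split.
  by move: T3; rewrite /three_pres all_map; apply: sub_all => r /=; rewrite size_map.
split.
- move=> r' /mapP [r Hr ->].
  rewrite eval_wordE -(evalz_pres (rels := [::]) _ (F4 r)) // (evalz_hom _ F1).
  exact: Hrel.
- move=> y; have [w Hw] := Hsurj y; exists (hom fg w).
  by rewrite eval_wordE (evalz_hom _ F1).
- move=> w1 w2; rewrite !eval_wordE => E.
  have E' : eval_word v (hom psi w1) = eval_word v (hom psi w2).
    by rewrite !eval_wordE !(evalz_hom _ F2).
  have P1 := Hinj _ _ E'.
  have P2 := pres_hom (fg := fg) (rels' := map (@syl_word k) (map subst rels)) _ P1.
  have P3 : pres_eq (map (@syl_word k) (map subst rels)) (hom fg (hom psi w1)) (hom fg (hom psi w2)).
    apply: P2 => r /mapP [r0 Hr0 ->].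
    apply: pe_trans (free_sub _ (F4 r0)) _.
    by apply: pe_rel; apply: map_f; apply: map_f.
  rewrite !hom_comp in P3.
  apply: pe_trans (pe_trans P3 _).
    apply: pe_sym; apply: free_sub; exact: hom_id_free.
  apply: free_sub; exact: hom_id_free.
Qed.

Lemma reduce2 n m rels (v : 'I_m -> 'rV[int]_n) (g h : 'I_m) (a b : int) :
  g != h -> three_pres rels -> pres_iso rels v ->
  (a != 0) || (b != 0) -> a *: v g + b *: v h = 0 ->
  exists m', exists rels' : seq (seq ('I_m' * int)), exists v' : 'I_m' -> 'rV[int]_n,
   (m' < m)%N /\ three_pres rels' /\ pres_iso rels' v'.
Proof.
move=> ngh T3 Hiso nz Rel.
set d := gcdz a b.
have dn0 : d != 0 by rewrite /d gcdz_eq0 negb_and.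
have [s [t Bz]] := Bezoutz a b.
have Ea := divzK (dvdz_gcdl a b); have Eb := divzK (dvdz_gcdr a b).
rewrite -/d in Ea Eb Bz.
apply: (reduce (a := (a %/ d)%Z) (b := (b %/ d)%Z) (s := s) (t := t) ngh T3 Hiso).
  by apply: (mulIf dn0); rewrite mulrDl -!mulrA Ea Eb Bz mul1r.
apply/rowP => j; move/rowP: Rel => /(_ j); rewrite !mxE => R.
rewrite -Ea -Eb in R.
have : ((a %/ d)%Z * v g 0 j + (b %/ d)%Z * v h 0 j) * d = 0 by rewrite -R; ring.
by move/eqP; rewrite mulf_eq0 (negbTE dn0) orbF => /eqP.
Qed.

Lemma rV_nz n (x : 'rV[int]_n) : x != 0 -> exists j, x 0 j != 0.
Proof.
move=> nz; apply/existsP; apply: contraR nz; rewrite negb_exists => /forallP H.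
apply/eqP/rowP => j; rewrite mxE; apply/eqP; have := H j; by rewrite negbK.
Qed.

Lemma dim_pair (R : realType) n m (v : 'I_m -> 'rV[int]_n) (g h : 'I_m) :
  (dimR R v [:: g; h] <= 1)%N ->
  exists a b : int, ((a != 0) || (b != 0)) /\ a *: v g + b *: v h = 0.
Proof.
rewrite /dimR /= => Hd.
have [vg0|nz] := eqVneq (v g) 0.
  by exists 1, 0; rewrite vg0 scaler0 scale0r addr0 oner_eq0.
have [j Hj] := rV_nz nz.
set vR := fun x => map_mx (fun z : int => z%:~R : R) (v x).
have vRg : vR g != 0.
  apply: contra Hj => /eqP/rowP/(_ j); rewrite !mxE => /eqP.
  by rewrite intr_eq0.
set U := (<< [:: vR g; vR h] >>)%VS.
have sub1 : (<[vR g]> <= U)%VS by rewrite -memvE memv_span // mem_head.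
have eqU : <[vR g]>%VS = U.
  apply/eqP; rewrite eqEdim sub1 /= dim_vline vRg; exact: Hd.
have : vR h \in <[vR g]>%VS by rewrite eqU memv_span // !inE eqxx orbT.
case/vlineP => lam Hl.
exists (- v h 0 j), (v g 0 j); split; first by rewrite Hj orbT.
apply/rowP => l; rewrite !mxE.
apply/eqP; rewrite -(intr_eq0 R) intrD !intrM intrN.
have El : forall x y, (vR x) 0 y = (v x 0 y)%:~R by move=> x y; rewrite mxE.
have Hl' : forall y, (v h 0 y)%:~R = lam * (v g 0 y)%:~R :> R.
  by move=> y; rewrite -!El Hl mxE.
by rewrite !Hl'; apply/eqP; ring.
Qed.

Lemma es0 m (x : 'I_m) (w : seq ('I_m * int)) :
  x \notin map fst w -> \sum_(p <- w) ((p.1 == x)%:R : int) *~ p.2 = 0.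
Proof.
move=> Hx; rewrite big1_seq // => p /= Hp.
have -> : (p.1 == x) = false.
  by apply/negbTE; apply: contra Hx => /eqP <-; apply: map_f.
by rewrite mul0rz.
Qed.

Lemma es_nf m (x : 'I_m) (w : seq ('I_m * int)) :
  normal_form w -> x \in map fst w -> \sum_(p <- w) ((p.1 == x)%:R : int) *~ p.2 != 0.
Proof.
elim: w => [|p w IH] //= /andP [/= /andP [Hp Hu] /andP [Hp2 Ha]].
rewrite big_cons inE; case: eqP => [E _|/eqP ne] /=.
  by rewrite E eqxx es0 // addr0 intz.
have -> : (p.1 == x) = false by rewrite eq_sym (negbTE ne).
by rewrite mul0rz add0r; apply: IH; rewrite /normal_form Hu Ha.
Qed.

Lemma empty_pres n : (forall y : 'rV[int]_n, y = 0) ->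
  pres_iso (m := 0) [::] (fun _ => 0 : 'rV[int]_n).
Proof.
move=> H; split.
- by [].
- by move=> y; exists [::]; rewrite (H y) /eval_word big_nil.
- move=> w1 w2 _.
  have E : forall w : word 0, w = [::] by case=> [|[[k Hk] b] w] //.
  have E1 := E w1; have E2 := E w2; subst w1 w2; exact: pe_refl.
Qed.

Lemma dim_le2 (R : realType) n m (v : 'I_m -> 'rV[int]_n) (g h i : 'I_m) (a b c : int) :
  a != 0 -> a *: v g + b *: v h + c *: v i = 0 -> (dimR R v [:: g; h; i] <= 2)%N.
Proof.
move=> an0 Rel; rewrite /dimR /= span_cons.
set vR := fun x => map_mx (fun z : int => z%:~R : R) (v x).
have aR : (a%:~R : R) != 0 by rewrite intr_eq0.
have Eg : vR g = (- b%:~R / a%:~R) *: vR h + (- c%:~R / a%:~R) *: vR i.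
  apply/rowP => l; rewrite !mxE.
  move/rowP: Rel => /(_ l); rewrite !mxE => E.
  have E' : (a%:~R * (v g 0 l)%:~R + b%:~R * (v h 0 l)%:~R + c%:~R * (v i 0 l)%:~R : R) = 0.
    by rewrite -!intrM -!intrD E.
  transitivity ((v g 0 l)%:~R - (a%:~R * (v g 0 l)%:~R + b%:~R * (v h 0 l)%:~R + c%:~R * (v i 0 l)%:~R) / a%:~R : R).
    by rewrite E' mul0r subr0.
  by field.
have Hin : vR g \in << [:: vR h; vR i] >>%VS.
  rewrite Eg; apply: memvD; apply: memvZ; apply: memv_span; by rewrite !inE eqxx ?orbT.
rewrite (addv_idPr _); first exact: dim_span.
by rewrite -memvE.
Qed.

Lemma dim_sub3 (R : realType) n m (v : 'I_m -> 'rV[int]_n) (g h i : 'I_m) :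
  (dimR R v [:: g; h] <= dimR R v [:: g; h; i])%N.
Proof.
rewrite /dimR /=; apply: dimvS; apply: sub_span => x; rewrite !inE => /orP [->|->] //.
by rewrite orbT.
Qed.

Theorem mainTheorem11 (R : realType) (n m : nat)
  (rels : seq (seq ('I_m * int))) (v : 'I_m -> 'rV[int]_n) :
  three_pres rels ->
  pres_iso rels v ->
  (forall (m' : nat) (rels' : seq (seq ('I_m' * int))) (v' : 'I_m' -> 'rV[int]_n),
      three_pres rels' -> pres_iso rels' v' -> (m <= m')%N) ->
  forall r, r \in rels ->
  forall w, leadsto r w -> w != [::] ->
    size w = 3%N /\ dimR R v (map fst w) = 2%N.
Proof.
move=> T3 Hiso Hmin r Hr w [Hnf [u Hu]] Hw.
have [Hrel Hsurj Hinj] := Hiso.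
have noRel : forall g h (a b : int), g != h -> (a != 0) || (b != 0) ->
    a *: v g + b *: v h = 0 -> False.
  move=> g h a b ngh nz Rel.
  have [m' [rels' [v' [lt [T3' I']]]]] := reduce2 ngh T3 Hiso nz Rel.
  by have := Hmin _ _ _ T3' I'; rewrite leqNgt lt.
have Einv : forall (V : zmodType) (f : 'I_m -> V), evalz f (syl_word w) = evalz f (syl_word r).
  move=> V f; rewrite -(evalz_pres (rels := [::]) _ Hu) //.
  by rewrite !evalz_cat evalz_inv addrCA subrr addr0.
have E0 : evalz v (syl_word w) = 0 by rewrite Einv; exact: Hrel.
have Hsub : {subset map fst w <= map fst r}.
  move=> x Hx; have := Einv int (fun y => (y == x)%:R); rewrite !evalz_syl /= => E.
  have nz := es_nf Hnf Hx.
  case: (boolP (x \in map fst r)) => // Hn.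
  by rewrite E es0 // eqxx in nz.
have Hsz : (size w <= 3)%N.
  rewrite -(size_map fst w).
  apply: leq_trans (uniq_leq_size (proj1 (andP Hnf)) Hsub) _.
  by rewrite size_map; exact: (allP T3 r Hr).
clear Einv Hsub Hu.
rewrite evalz_syl in E0.
move: Hw Hnf E0 Hsz.
case: w => [|[g a] [|[h b] [|[i c] [|q w']]]] //= _.
-
  rewrite /normal_form /= andbT => an0; rewrite big_cons big_nil addr0 scale_intE => E.
  have vg0 : v g = 0.
    apply/rowP => j; move/rowP: E => /(_ j); rewrite !mxE => /eqP.
    by rewrite mulf_eq0 (negbTE an0) /= => /eqP.
  case: (pickP (fun x => x != g)) => [h /= nhg|allg].
    exfalso; apply: (noRel g h 1 0); first by rewrite eq_sym.
      by rewrite oner_eq0.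
    by rewrite vg0 scaler0 scale0r addr0.
  exfalso.
  have all0 : forall w : word m, eval_word v w = 0.
    move=> w; rewrite /eval_word big1 // => x _.
    have /eqP -> : x.1 == g by move: (allg x.1) => /= /negbFE.
    by rewrite vg0 oppr0; case: x.2.
  have Y0 : forall y : 'rV[int]_n, y = 0.
    by move=> y; have [w Hw] := Hsurj y; rewrite -Hw all0.
  have := Hmin 0%N [::] _ is_true_true (empty_pres Y0).
  move=> Hm; have := ltn_ord g; lia.
-
  rewrite /normal_form /= !inE andbT => /and4P [ngh an0 bn0 _].
  rewrite !big_cons big_nil addr0 !scale_intE => E _.
  exfalso; apply: (noRel g h a b ngh); first by rewrite an0.
  exact: E.
-
  rewrite /normal_form /= !inE andbT negb_or => /and5P [/andP [/andP [ngh ngi] nhi] an0 bn0 cn0 _].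
  rewrite !big_cons big_nil addr0 !scale_intE addrA => E _.
  split => //.
  apply/eqP; rewrite eqn_leq (dim_le2 R an0 E) /=.
  rewrite ltnNge; apply/negP => Hd.
  have [a' [b' [nz E']]] := dim_pair (leq_trans (dim_sub3 R v g h i) Hd).
  exact: (noRel g h a' b' ngh nz E').
Qed.
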